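(* Let $\Omega$ be a bounded domain in $\mathbb R^n$, $n\ge3$, and let $(f,\Gamma)$ satisfy the standing structural assumptions. If $0<w\in LSC(\Omega)$ is a viscosity super-solution of $f(\lambda(-A^u))=1$ in $\Omega$ with $w(x)\to+\infty$ as $\mathrm{dist}(x,\partial\Omega)\to0$, and if $\mathbb R^n\setminus\bar\Omega$ contains a ball $B_R(x_0)$, then $w\ge u^{(out)}_{R,x_0}>0$ in $\Omega$.
   Context: Let $n\ge3$. For a positive $C^2$ function $u$, its conformal Hessian is $A^u=-\frac{2}{n-2}u^{-\frac{n+2}{n-2}}\nabla^2u+\frac{2n}{(n-2)^2}u^{-\frac{2n}{n-2}}\nabla u\otimes\nabla u-\frac{2}{(n-2)^2}u^{-\frac{2n}{n-2}}|\nabla u|^2I$, and $\lambda(-A^u)$ is the vector of eigenvalues of $-A^u$. Let $\Gamma_n=\{\mu:\mu_i>0\ \forall i\}$. Standing structural assumptions on $(f,\Gamma)$: $\Gamma\subset\mathbb R^n$ is an open symmetric cone with vertex at the origin, $\Gamma+\Gamma_n\subset\Gamma$; $f\in C^0(\bar\Gamma)$ symmetric, $f>0$ in $\Gamma$, $f=0$ on $\partial\Gamma$, $f(\lambda+\mu)\ge f(\lambda)$ for $\lambda\in\Gamma,\mu\in\Gamma_n$, $f$ homogeneous of some positive degree. Viscosity super-solution: $w\in LSC(\Omega)$ (lower semicontinuous, values in $\mathbb R\cup\{+\infty\}$, $w\not\equiv+\infty$) such that for every $x_0\in\Omega$, $\varphi\in C^2(\Omega)$ with $(w-\varphi)(x_0)=0$,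 $w-\varphi\ge0$ near $x_0$, either $\lambda(-A^\varphi(x_0))\notin\bar\Gamma$ or $f(\lambda(-A^\varphi(x_0)))\le1$. Canonical solutions: there is a unique constant $\alpha=\alpha(f)>0$ such that for all $R>0$, $x_0\in\mathbb R^n$ the function $u^{(out)}_{R,x_0}(x)=\alpha\big(\frac{R}{|x-x_0|^2-R^2}\big)^{\frac{n-2}{2}}$ satisfies $f(\lambda(-A^{u}))=1$ in $\mathbb R^n\setminus\bar B_R(x_0)$ (and $u^{(in)}_{R,x_0}(x)=\alpha\big(\frac{R}{R^2-|x-x_0|^2}\big)^{\frac{n-2}{2}}$ satisfies it in $B_R(x_0)$). *)

(* Defs.v *)
From mathcomp Require Import all_boot.
From Stdlib Require Import Reals.


Unset Printing Implicit Defensive.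
Open Scope R_scope.

Definition vec (n : nat) := 'I_n -> R.
Definition mat (n : nat) := 'I_n -> 'I_n -> R.

Definition rsum {n : nat} (F : 'I_n -> R) : R := \big[Rplus/0]_(i < n) F i.

Definition dot {n} (x y : vec n) : R := rsum (fun i => x i * y i).
Definition nnorm {n} (x : vec n) : R := sqrt (dot x x).
Definition vsub {n} (x y : vec n) : vec n := fun i => x i - y i.
Definition vadd {n} (x y : vec n) : vec n := fun i => x i + y i.
Definition vscale {n} (t : R) (x : vec n) : vec n := fun i => t * x i.
Definition ndist {n} (x y : vec n) : R := nnorm (vsub x y).
Definition matvec {n} (M : mat n) (v : vec n) : vec n :=
  fun k => rsum (fun j => M k j * v j).
Definition mopp {n} (M : mat n) : mat n := fun i j => - M i j.

Definition is_eigvals {n} (M : mat n) (mu : vec n) : Prop :=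
  exists V : 'I_n -> vec n,
    (forall i j, dot (V i) (V j) = if i == j then 1 else 0) /\
    (forall i, matvec M (V i) = vscale (mu i) (V i)).

Definition nclosure {n} (S : vec n -> Prop) (x : vec n) : Prop :=
  forall eps, 0 < eps -> exists y, S y /\ ndist x y < eps.
Definition is_open {n} (S : vec n -> Prop) : Prop :=
  forall x, S x -> exists d, 0 < d /\ forall y, ndist y x < d -> S y.
Definition nboundary {n} (S : vec n -> Prop) (x : vec n) : Prop :=
  nclosure S x /\ ~ S x.
Definition is_connected {n} (S : vec n -> Prop) : Prop :=
  ~ exists U V : vec n -> Prop,
      is_open U /\ is_open V /\
      (exists x, S x /\ U x) /\ (exists x, S x /\ V x) /\
      (forall x, S x -> U x \/ V x) /\
      (forall x, S x -> U x -> V x -> False).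
Definition nbounded {n} (S : vec n -> Prop) : Prop :=
  exists M, forall x, S x -> nnorm x <= M.
Definition ndomain {n} (S : vec n -> Prop) : Prop :=
  is_open S /\ (exists x, S x) /\ is_connected S.

Definition IsC2 {n} (U : vec n -> Prop) (phi : vec n -> R)
  (g : vec n -> vec n) (H : vec n -> mat n) : Prop :=
  (forall x, U x -> forall eps, 0 < eps -> exists d, 0 < d /\
     forall y, ndist y x < d ->
       Rabs (phi y - phi x - dot (g x) (vsub y x)) <= eps * ndist y x) /\
  (forall x, U x -> forall i, forall eps, 0 < eps -> exists d, 0 < d /\
     forall y, ndist y x < d ->
       Rabs (g y i - g x i - dot (H x i) (vsub y x)) <= eps * ndist y x) /\
  (forall x, U x -> forall i j, forall eps, 0 < eps -> exists d, 0 < d /\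
     forall y, U y -> ndist y x < d -> Rabs (H y i j - H x i j) < eps).

(* conformal Hessian A^u at a point, from the values u, grad u, D^2 u *)
Definition conf_hess (n : nat) (u : R) (g : vec n) (H : mat n) : mat n :=
  let m := INR n in
  fun i j =>
    - (2 / (m - 2)) * Rpower u (- ((m + 2) / (m - 2))) * H i j
    + (2 * m / ((m - 2) * (m - 2))) * Rpower u (- (2 * m / (m - 2))) * (g i * g j)
    - (2 / ((m - 2) * (m - 2))) * Rpower u (- (2 * m / (m - 2)))
        * dot g g * (if i == j then 1 else 0).

Definition structural (n : nat) (f : vec n -> R) (Gam : vec n -> Prop) : Prop :=
  is_open Gam /\ (exists l, Gam l) /\ ~ Gam (fun _ => 0) /\
  (forall l t, Gam l -> 0 < t -> Gam (vscale t l)) /\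
  (forall (s : 'I_n -> 'I_n) l, bijective s -> Gam l -> Gam (fun i => l (s i))) /\
  (forall l mu, Gam l -> (forall i, 0 < mu i) -> Gam (vadd l mu)) /\
  (forall l, nclosure Gam l -> forall eps, 0 < eps -> exists d, 0 < d /\
     forall mu, nclosure Gam mu -> ndist mu l < d -> Rabs (f mu - f l) < eps) /\
  (forall (s : 'I_n -> 'I_n) l, bijective s -> nclosure Gam l ->
     f (fun i => l (s i)) = f l) /\
  (forall l, Gam l -> 0 < f l) /\
  (forall l, nboundary Gam l -> f l = 0) /\
  (forall l mu, Gam l -> (forall i, 0 < mu i) -> f l <= f (vadd l mu)) /\
  (exists p, 0 < p /\ forall l t, nclosure Gam l -> 0 < t ->
     f (vscale t l) = Rpower t p * f l).

Definition solves_at {n} (f : vec n -> R) (Gam : vec n -> Prop)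
  (u : R) (g : vec n) (H : mat n) : Prop :=
  forall mu, is_eigvals (mopp (conf_hess n u g H)) mu -> nclosure Gam mu /\ f mu = 1.

Definition u_out (n : nat) (alpha Rr : R) (x0 x : vec n) : R :=
  alpha * Rpower (Rr / (ndist x x0 ^ 2 - Rr ^ 2)) ((INR n - 2) / 2).
Definition u_in (n : nat) (alpha Rr : R) (x0 x : vec n) : R :=
  alpha * Rpower (Rr / (Rr ^ 2 - ndist x x0 ^ 2)) ((INR n - 2) / 2).

Definition canonical_const (n : nat) (f : vec n -> R) (Gam : vec n -> Prop)
  (alpha : R) : Prop :=
  0 < alpha /\
  (forall Rr (x0 : vec n), 0 < Rr ->
     forall g H, IsC2 (fun x => Rr < ndist x x0) (u_out n alpha Rr x0) g H ->
     forall x, Rr < ndist x x0 -> solves_at f Gam (u_out n alpha Rr x0 x) (g x) (H x)) /\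
  (forall Rr (x0 : vec n), 0 < Rr ->
     forall g H, IsC2 (fun x => ndist x x0 < Rr) (u_in n alpha Rr x0) g H ->
     forall x, ndist x x0 < Rr -> solves_at f Gam (u_in n alpha Rr x0 x) (g x) (H x)).

Inductive ER := ERfin (r : R) | ERinf.
Definition ER_lt (a : R) (e : ER) : Prop :=
  match e with ERfin r => a < r | ERinf => True end.
Definition ER_le (a : R) (e : ER) : Prop :=
  match e with ERfin r => a <= r | ERinf => True end.

Definition lsc_on {n} (Om : vec n -> Prop) (w : vec n -> ER) : Prop :=
  forall x, Om x -> forall a, ER_lt a (w x) ->
    exists d, 0 < d /\ forall y, Om y -> ndist y x < d -> ER_lt a (w y).

Definition visc_supersol {n} (f : vec n -> R) (Gam : vec n -> Prop)
  (Om : vec n -> Prop) (w : vec n -> ER) : Prop :=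
  lsc_on Om w /\ (exists x, Om x /\ w x <> ERinf) /\
  forall x0, Om x0 -> forall phi g H, IsC2 Om phi g H ->
    w x0 = ERfin (phi x0) ->
    (exists d, 0 < d /\ forall y, Om y -> ndist y x0 < d -> ER_le (phi y) (w y)) ->
    forall mu, is_eigvals (mopp (conf_hess n (phi x0) (g x0) (H x0))) mu ->
      ~ nclosure Gam mu \/ f mu <= 1.

(* Main.v *)
From HB Require Import structures.
Require Import Defs.
From mathcomp Require Import all_boot zify.
From Stdlib Require Import Reals Lra Lia Classical ClassicalEpsilon FunctionalExtensionality.
From Coquelicot Require Import Coquelicot.
Open Scope R_scope.
Set Warnings "-notation-overridden -ambiguous-paths".

HB.instance Definition _ := Monoid.isComLaw.Build R 0 Rplus (fun a b c => esym (Rplus_assoc a b c)) Rplus_comm Rplus_0_l.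

Lemma rsum_ext {n} (F G : 'I_n -> R) : (forall i, F i = G i) -> rsum F = rsum G.
Proof. move=> H; rewrite /rsum; apply: eq_bigr => i _; apply: H. Qed.

Lemma rsum_add {n} (F G : 'I_n -> R) : rsum (fun i => F i + G i) = rsum F + rsum G.
Proof. rewrite /rsum. exact: big_split. Qed.

Lemma rsum_scal {n} c (F : 'I_n -> R) : rsum (fun i => c * F i) = c * rsum F.
Proof.
rewrite /rsum. symmetry.
apply: (big_morph (fun x => c * x)); [move=> x y /=; ring | ring].
Qed.

Lemma rsum_opp {n} (F : 'I_n -> R) : rsum (fun i => - F i) = - rsum F.
Proof.
rewrite -(rsum_ext (fun i => -1 * F i)); last by move=> i; ring.
rewrite rsum_scal; ring.
Qed.

Lemma rsum_sub {n} (F G : 'I_n -> R) : rsum (fun i => F i - G i) = rsum F - rsum G.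
Proof.
rewrite /Rminus -rsum_opp -rsum_add. done.
Qed.

Lemma rsum_le {n} (F G : 'I_n -> R) : (forall i, F i <= G i) -> rsum F <= rsum G.
Proof.
move=> H; rewrite /rsum. apply: (big_ind2 (fun a b => a <= b)); first lra.
- move=> a b c d; lra.
- move=> i _; apply: H.
Qed.

Lemma rsum_ge0 {n} (F : 'I_n -> R) : (forall i, 0 <= F i) -> 0 <= rsum F.
Proof.
move=> H; rewrite /rsum. apply: (big_ind (fun a => 0 <= a)); first lra.
- move=> a b; lra.
- move=> i _; apply: H.
Qed.

Lemma rsum_const {n} (b : R) : rsum (fun _ : 'I_n => b) = INR n * b.
Proof.
rewrite /rsum. elim: n => [|n IH]; first by rewrite big_ord0 /=; ring.
rewrite big_ord_recr S_INR /= IH; ring.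
Qed.

Lemma rsum_term {n} (F : 'I_n -> R) i : (forall j, 0 <= F j) -> F i <= rsum F.
Proof.
move=> H. rewrite /rsum (bigD1 i) //=.
rewrite -{1}(Rplus_0_r (F i)); apply: Rplus_le_compat_l.
apply: (big_ind (fun a => 0 <= a)); first lra. move=> a b; lra. move=> j _; apply: H.
Qed.

Lemma rsum_delta {n} (a : 'I_n -> R) i :
  rsum (fun j => if i == j then a j else 0) = a i.
Proof.
rewrite /rsum (bigD1 i) //= eqxx.
rewrite big1; first ring.
move=> j Hj. case: eqP => // E. by rewrite E eqxx in Hj.
Qed.

Lemma rsum_delta' {n} (a : 'I_n -> R) i :
  rsum (fun j => a j * (if i == j then 1 else 0)) = a i.
Proof.
rewrite -(rsum_delta a i). apply: rsum_ext => j. case: (i == j); ring.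
Qed.

Lemma rsum_abs {n} (F : 'I_n -> R) : Rabs (rsum F) <= rsum (fun i => Rabs (F i)).
Proof.
rewrite /rsum. apply: (big_ind2 (fun a b => Rabs a <= b)).
- rewrite Rabs_R0; lra.
- move=> a b c d H1 H2. apply: Rle_trans (Rabs_triang _ _) _. lra.
- move=> i _; lra.
Qed.

Lemma dot_ge0 {n} (x : vec n) : 0 <= dot x x.
Proof. apply: rsum_ge0 => i; apply: Rle_0_sqr. Qed.

Lemma nnorm_ge0 {n} (x : vec n) : 0 <= nnorm x.
Proof. apply: sqrt_pos. Qed.

Lemma nnorm_sq {n} (x : vec n) : nnorm x ^ 2 = dot x x.
Proof. rewrite /nnorm /= Rmult_1_r sqrt_sqrt //; apply: dot_ge0. Qed.

Lemma coord_le {n} (x : vec n) i : Rabs (x i) <= nnorm x.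
Proof.
rewrite /nnorm -sqrt_Rsqr_abs. apply: sqrt_le_1_alt.
rewrite /Rsqr. apply: (rsum_term (fun j => x j * x j)) => j; apply: Rle_0_sqr.
Qed.

Lemma dot_bound {n} (a h : vec n) : Rabs (dot a h) <= rsum (fun i => Rabs (a i)) * nnorm h.
Proof.
apply: Rle_trans (rsum_abs _) _. rewrite Rmult_comm -rsum_scal.
apply: rsum_le => i. rewrite Rabs_mult Rmult_comm. apply: Rmult_le_compat_r.
apply: Rabs_pos. apply: coord_le.
Qed.

Lemma ndist_sym {n} (x y : vec n) : ndist x y = ndist y x.
Proof.
rewrite /ndist /nnorm /dot /vsub. f_equal. apply: rsum_ext => i; ring.
Qed.

Lemma ndist_sq {n} (x y : vec n) : ndist x y ^ 2 = dot (vsub x y) (vsub x y).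
Proof. apply: nnorm_sq. Qed.

Lemma ndist_ge0 {n} (x y : vec n) : 0 <= ndist x y.
Proof. apply: nnorm_ge0. Qed.

Lemma ndist_coord_small {n} (x y : vec n) e : 0 < e ->
  (forall i, Rabs (x i - y i) < e) -> ndist x y <= sqrt (INR n) * e.
Proof.
move=> He H. rewrite /ndist /nnorm -(sqrt_Rsqr e); last lra.
rewrite -sqrt_mult; [|apply: pos_INR|apply: Rle_0_sqr]. apply: sqrt_le_1_alt.
rewrite -rsum_const. apply: rsum_le => i. rewrite /vsub /Rsqr.
have := H i. move=> Hi. have: Rabs (x i - y i) * Rabs (x i - y i) <= e * e.
  apply: Rmult_le_compat; try apply: Rabs_pos; lra.
rewrite -Rabs_mult Rabs_right //. apply: Rle_ge; apply: Rle_0_sqr.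
Qed.

Definition diffat {n} (phi : vec n -> R) (x G : vec n) := forall eps, 0 < eps ->
  exists d, 0 < d /\ forall y, ndist y x < d ->
    Rabs (phi y - phi x - dot G (vsub y x)) <= eps * ndist y x.
Definition contat {n} (phi : vec n -> R) (x : vec n) := forall eps, 0 < eps ->
  exists d, 0 < d /\ forall y, ndist y x < d -> Rabs (phi y - phi x) < eps.
Definition KK {n} (G : vec n) := rsum (fun i => Rabs (G i)).

Lemma KK_ge0 {n} (G : vec n) : 0 <= KK G.
Proof. apply: rsum_ge0 => i; apply: Rabs_pos. Qed.

Lemma diff_bound {n} {phi : vec n -> R} {x G} : diffat phi x G ->
  exists d, 0 < d /\ forall y, ndist y x < d ->
    Rabs (phi y - phi x) <= (KK G + 1) * ndist y x.
Proof.
move=> H. have [d [Hd Hy]] := H 1 Rlt_0_1. exists d; split => // y Hyd.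
have := Hy y Hyd. have := dot_bound G (vsub y x). rewrite -/(KK G) => H1 H2.
have E : phi y - phi x = (phi y - phi x - dot G (vsub y x)) + dot G (vsub y x) by ring.
rewrite E. apply: Rle_trans (Rabs_triang _ _) _. rewrite /ndist in H2 *. lra.
Qed.

Lemma diff_cont {n} {phi : vec n -> R} {x G} : diffat phi x G -> contat phi x.
Proof.
move=> H eps He. have [d [Hd Hy]] := diff_bound H.
have HK := KK_ge0 G.
exists (Rmin d (eps / (KK G + 2))); split.
  apply: Rmin_pos => //. apply: Rdiv_lt_0_compat; lra.
move=> y Hyd. have H1 := Hy y (Rlt_le_trans _ _ _ Hyd (Rmin_l _ _)).
have H2 := Rlt_le_trans _ _ _ Hyd (Rmin_r _ _).
have H3 : (KK G + 1) * ndist y x < eps.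
  have Hn := ndist_ge0 y x.
  apply: (Rle_lt_trans _ ((KK G + 2) * ndist y x)); first nra.
  have -> : eps = (KK G + 2) * (eps / (KK G + 2)) by field; lra.
  apply: Rmult_lt_compat_l; lra.
lra.
Qed.

Lemma diffat_ext_fun {n} (phi psi : vec n -> R) x G :
  (forall y, phi y = psi y) -> diffat phi x G -> diffat psi x G.
Proof.
move=> E H eps He. have [d [Hd Hy]] := H eps He. exists d; split => // y Hyd.
rewrite -!E. by apply: Hy.
Qed.

Lemma diffat_ext_grad {n} (phi : vec n -> R) x G G' :
  (forall j, G j = G' j) -> diffat phi x G -> diffat phi x G'.
Proof.
move=> E H eps He. have [d [Hd Hy]] := H eps He. exists d; split => // y Hyd.
have -> : dot G' (vsub y x) = dot G (vsub y x).
  rewrite /dot. apply: rsum_ext => i. by rewrite E.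
by apply: Hy.
Qed.

Lemma contat_ext_fun {n} (phi psi : vec n -> R) x :
  (forall y, phi y = psi y) -> contat phi x -> contat psi x.
Proof.
move=> E H eps He. have [d [Hd Hy]] := H eps He. exists d; split => // y Hyd.
rewrite -!E. by apply: Hy.
Qed.

Definition qf {n} (x0 : vec n) (y : vec n) := dot (vsub y x0) (vsub y x0).

Lemma diffat_q {n} (x0 x : vec n) :
  diffat (qf x0) x (fun j => 2 * (x j - x0 j)).
Proof.
move=> eps He. exists eps; split => // y Hyd.
have -> : qf x0 y - qf x0 x - dot (fun j => 2 * (x j - x0 j)) (vsub y x) = ndist y x ^ 2.
  rewrite ndist_sq /qf /dot -!rsum_sub. apply: rsum_ext => i. rewrite /vsub. ring.
have Hn := ndist_ge0 y x. rewrite Rabs_right; last by apply: Rle_ge; nra.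
simpl. nra.
Qed.

Lemma diffat_coord {n} (x0 x : vec n) i :
  diffat (fun y => y i - x0 i) x (fun j => if i == j then 1 else 0).
Proof.
move=> eps He. exists 1; split; first lra. move=> y Hyd.
have -> : dot (fun j => if i == j then 1 else 0) (vsub y x) = y i - x i.
  rewrite /dot. transitivity (vsub y x i); last done. rewrite -(rsum_delta (vsub y x) i). apply: rsum_ext => j.
  case: (i == j); rewrite /vsub; ring.
have -> : y i - x0 i - (x i - x0 i) - (y i - x i) = 0 by ring.
rewrite Rabs_R0. have := ndist_ge0 y x. nra.
Qed.

Lemma deriv_bound {F : R -> R} {p D} : derivable_pt_lim F p D ->
  forall eps, 0 < eps -> exists del, 0 < del /\ forall z, Rabs z < del ->
    Rabs (F (p + z) - F p - D * z) <= eps * Rabs z.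
Proof.
move=> H eps He. have [del Hdel] := H eps He. exists del; split; first by apply: cond_pos.
move=> z Hz. case: (Req_dec z 0) => [->|Hz0].
  rewrite Rplus_0_r !Rmult_0_r Rabs_R0. have -> : F p - F p - 0 = 0 by ring.
  rewrite Rabs_R0; lra.
have := Hdel z Hz0 Hz.
have -> : F (p + z) - F p - D * z = ((F (p + z) - F p) / z - D) * z by field.
rewrite Rabs_mult. move=> H1. apply: Rmult_le_compat_r; [apply: Rabs_pos|lra].
Qed.

Lemma frac_le1 a Y : 0 <= a -> 0 <= Y -> a / (a + 1) * Y <= Y.
Proof.
move=> Ha HY. have H1 : a / (a + 1) <= 1.
  apply: (Rmult_le_reg_r (a + 1)); first lra. field_simplify; lra.
have H2 : 0 <= a / (a + 1) by apply: Rdiv_le_0_compat; lra.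
nra.
Qed.

Lemma diffat_chain {n} (F : R -> R) (phi : vec n -> R) x G D :
  derivable_pt_lim F (phi x) D -> diffat phi x G ->
  diffat (fun y => F (phi y)) x (fun j => D * G j).
Proof.
move=> HF Hp eps He.
have [d1 [Hd1 H1]] := diff_bound Hp.
set C := KK G + 1. have HC : 0 < C by have := KK_ge0 G; rewrite /C; lra.
have [del [Hdel H2]] := deriv_bound HF (eps / (2 * C)) ltac:(apply: Rdiv_lt_0_compat; lra).
have HD := Rabs_pos D.
have [d3 [Hd3 H3]] := Hp (eps / (2 * (Rabs D + 1))) ltac:(apply: Rdiv_lt_0_compat; lra).
exists (Rmin d1 (Rmin d3 (del / C))); split.
  repeat apply: Rmin_pos => //. apply: Rdiv_lt_0_compat; lra.
move=> y Hyd.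
have Hy1 := Rlt_le_trans _ _ _ Hyd (Rmin_l _ _).
have Hy2 := Rlt_le_trans _ _ _ Hyd (Rle_trans _ _ _ (Rmin_r _ _) (Rmin_l _ _)).
have Hy3 := Rlt_le_trans _ _ _ Hyd (Rle_trans _ _ _ (Rmin_r _ _) (Rmin_r _ _)).
set z := phi y - phi x. set h := ndist y x.
have Hh := ndist_ge0 y x.
have Hz : Rabs z <= C * h := H1 y Hy1.
have Hzd : Rabs z < del.
  apply: Rle_lt_trans Hz _. have -> : del = C * (del / C) by field; lra.
  apply: Rmult_lt_compat_l => //.
have E1 := H2 z Hzd. rewrite /z in E1.
have E3 := H3 y Hy2.
have -> : dot (fun j => D * G j) (vsub y x) = D * dot G (vsub y x).
  rewrite /dot -rsum_scal. apply: rsum_ext => j; ring.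
have -> : F (phi y) - F (phi x) - D * dot G (vsub y x) =
   (F (phi (x) + (phi y - phi x)) - F (phi x) - D * (phi y - phi x))
   + D * (phi y - phi x - dot G (vsub y x)).
  have -> : phi x + (phi y - phi x) = phi y by ring. ring.
apply: Rle_trans (Rabs_triang _ _) _. rewrite Rabs_mult.
have A1 : eps / (2 * C) * Rabs (phi y - phi x) <= eps / 2 * h.
  apply: Rle_trans (_ : eps / (2 * C) * (C * h) <= _).
  apply: Rmult_le_compat_l => //. apply: Rlt_le; apply: Rdiv_lt_0_compat; lra.
  right; field; lra.
have A2 : Rabs D * Rabs (phi y - phi x - dot G (vsub y x)) <= eps / 2 * h.
  apply: Rle_trans (_ : Rabs D * (eps / (2 * (Rabs D + 1)) * h) <= _).
  apply: Rmult_le_compat_l => //.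
  have -> : Rabs D * (eps / (2 * (Rabs D + 1)) * h) = (Rabs D / (Rabs D + 1)) * (eps / 2 * h) by field; lra.
  apply: frac_le1 => //. have := ndist_ge0 y x. rewrite -/h. nra.
lra.
Qed.

Lemma diffat_mul {n} (a b : vec n -> R) x Ga Gb :
  diffat a x Ga -> diffat b x Gb ->
  diffat (fun y => a y * b y) x (fun j => a x * Gb j + b x * Ga j).
Proof.
move=> Ha Hb eps He.
have [db [Hdb Bb]] := diff_bound Hb.
set C := KK Gb + 1. have HC : 0 < C by have := KK_ge0 Gb; rewrite /C; lra.
have [dc [Hdc Ca]] := diff_cont Ha (eps / (3 * C)) ltac:(apply: Rdiv_lt_0_compat; lra).
have HA := Rabs_pos (a x). have HB := Rabs_pos (b x).
have [d1 [Hd1 E1]] := Ha (eps / (3 * (Rabs (b x) + 1))) ltac:(apply: Rdiv_lt_0_compat; lra).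
have [d2 [Hd2 E2]] := Hb (eps / (3 * (Rabs (a x) + 1))) ltac:(apply: Rdiv_lt_0_compat; lra).
exists (Rmin (Rmin db dc) (Rmin d1 d2)); split.
  repeat apply: Rmin_pos => //.
move=> y Hyd.
have Hy1 := Rlt_le_trans _ _ _ Hyd (Rle_trans _ _ _ (Rmin_l _ _) (Rmin_l _ _)).
have Hy2 := Rlt_le_trans _ _ _ Hyd (Rle_trans _ _ _ (Rmin_l _ _) (Rmin_r _ _)).
have Hy3 := Rlt_le_trans _ _ _ Hyd (Rle_trans _ _ _ (Rmin_r _ _) (Rmin_l _ _)).
have Hy4 := Rlt_le_trans _ _ _ Hyd (Rle_trans _ _ _ (Rmin_r _ _) (Rmin_r _ _)).
have Hh := ndist_ge0 y x. set h := ndist y x in Hh Hy1 Hy2 Hy3 Hy4 *.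
have -> : dot (fun j => a x * Gb j + b x * Ga j) (vsub y x) =
   a x * dot Gb (vsub y x) + b x * dot Ga (vsub y x).
  rewrite /dot -!rsum_scal -rsum_add. apply: rsum_ext => j; ring.
have -> : a y * b y - a x * b x - (a x * dot Gb (vsub y x) + b x * dot Ga (vsub y x))
  = a x * (b y - b x - dot Gb (vsub y x)) + b x * (a y - a x - dot Ga (vsub y x))
    + (a y - a x) * (b y - b x) by ring.
apply: Rle_trans (Rabs_triang _ _) _.
apply: Rle_trans (Rplus_le_compat_r _ _ _ (Rabs_triang _ _)) _.
rewrite !Rabs_mult.
have F1 := E2 y Hy4. have F2 := E1 y Hy3. have F3 := Ca y Hy2. have F4 := Bb y Hy1.
rewrite -/h in F1 F2 F4. rewrite -/C in F4.
have G1 : Rabs (a x) * Rabs (b y - b x - dot Gb (vsub y x)) <= eps / 3 * h.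
  apply: Rle_trans (_ : Rabs (a x) * (eps / (3 * (Rabs (a x) + 1)) * h) <= _).
  apply: Rmult_le_compat_l => //.
  have -> : Rabs (a x) * (eps / (3 * (Rabs (a x) + 1)) * h) = (Rabs (a x) / (Rabs (a x) + 1)) * (eps / 3 * h) by field; lra.
  apply: frac_le1 => //. have := ndist_ge0 y x. rewrite -/h. nra.
have G2 : Rabs (b x) * Rabs (a y - a x - dot Ga (vsub y x)) <= eps / 3 * h.
  apply: Rle_trans (_ : Rabs (b x) * (eps / (3 * (Rabs (b x) + 1)) * h) <= _).
  apply: Rmult_le_compat_l => //.
  have -> : Rabs (b x) * (eps / (3 * (Rabs (b x) + 1)) * h) = (Rabs (b x) / (Rabs (b x) + 1)) * (eps / 3 * h) by field; lra.
  apply: frac_le1 => //. have := ndist_ge0 y x. rewrite -/h. nra.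
have G3 : Rabs (a y - a x) * Rabs (b y - b x) <= eps / 3 * h.
  apply: Rle_trans (_ : eps / (3 * C) * (C * h) <= _).
  apply: Rmult_le_compat; try apply: Rabs_pos; lra.
  right; field; lra.
lra.
Qed.

Lemma diffat_const {n} (c : R) (x : vec n) : diffat (fun _ => c) x (fun _ => 0).
Proof.
move=> eps He. exists 1; split; first lra. move=> y _.
have -> : dot (fun _ : 'I_n => 0) (vsub y x) = 0.
  rewrite /dot (rsum_ext _ (fun _ => 0)); last by move=> j; ring.
  rewrite rsum_const; ring.
have -> : c - c - 0 = 0 by ring. rewrite Rabs_R0. have := ndist_ge0 y x. nra.
Qed.

Lemma cont_pt_eps {F : R -> R} {p} : continuity_pt F p ->
  forall eps, 0 < eps -> exists del, 0 < del /\ forall z, Rabs (z - p) < del ->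
    Rabs (F z - F p) < eps.
Proof.
move=> H eps He. have [del [Hdel H1]] := H eps He. exists del; split => //.
move=> z Hz. case: (Req_dec z p) => [->|Hzp].
  have -> : F p - F p = 0 by ring. rewrite Rabs_R0; lra.
apply: (H1 z). split. split => //. by apply: not_eq_sym. exact: Hz.
Qed.

Lemma contat_comp {n} (F : R -> R) (phi : vec n -> R) x :
  continuity_pt F (phi x) -> contat phi x -> contat (fun y => F (phi y)) x.
Proof.
move=> HF Hp eps He. have [del [Hdel H1]] := cont_pt_eps HF eps He.
have [d [Hd H2]] := Hp del Hdel. exists d; split => // y Hy.
apply: H1. by apply: H2.
Qed.

Lemma contat_mul {n} (a b : vec n -> R) x :
  contat a x -> contat b x -> contat (fun y => a y * b y) x.
Proof.
move=> Ha Hb eps He.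
have HA := Rabs_pos (a x). have HB := Rabs_pos (b x).
set e := Rmin 1 (eps / (Rabs (a x) + Rabs (b x) + 1)).
have He' : 0 < e. apply: Rmin_pos; first lra. apply: Rdiv_lt_0_compat; lra.
have [d1 [Hd1 H1]] := Ha e He'. have [d2 [Hd2 H2]] := Hb e He'.
exists (Rmin d1 d2); split; first by apply: Rmin_pos.
move=> y Hy. have A1 := H1 y (Rlt_le_trans _ _ _ Hy (Rmin_l _ _)).
have A2 := H2 y (Rlt_le_trans _ _ _ Hy (Rmin_r _ _)).
have -> : a y * b y - a x * b x = a x * (b y - b x) + b x * (a y - a x) + (a y - a x) * (b y - b x) by ring.
apply: Rle_lt_trans (Rabs_triang _ _) _.
apply: Rle_lt_trans (Rplus_le_compat_r _ _ _ (Rabs_triang _ _)) _.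
rewrite !Rabs_mult.
have Hle1 : e <= 1 := Rmin_l _ _.
have Hle2 : e <= eps / (Rabs (a x) + Rabs (b x) + 1) := Rmin_r _ _.
have Hq : e * (Rabs (a x) + Rabs (b x) + 1) <= eps.
  apply: Rle_trans (_ : eps / (Rabs (a x) + Rabs (b x) + 1) * (Rabs (a x) + Rabs (b x) + 1) <= _).
  apply: Rmult_le_compat_r; lra. right; field; lra.
have P1 : Rabs (a x) * Rabs (b y - b x) <= Rabs (a x) * e.
  apply: Rmult_le_compat_l; lra.
have P2 : Rabs (b x) * Rabs (a y - a x) <= Rabs (b x) * e.
  apply: Rmult_le_compat_l; lra.
have P3 : Rabs (a y - a x) * Rabs (b y - b x) < e * 1.
  have := Rabs_pos (a y - a x). have := Rabs_pos (b y - b x). nra.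
nra.
Qed.

Lemma contat_add {n} (a b : vec n -> R) x :
  contat a x -> contat b x -> contat (fun y => a y + b y) x.
Proof.
move=> Ha Hb eps He.
have [d1 [Hd1 H1]] := Ha (eps/2) ltac:(lra). have [d2 [Hd2 H2]] := Hb (eps/2) ltac:(lra).
exists (Rmin d1 d2); split; first by apply: Rmin_pos.
move=> y Hy. have A1 := H1 y (Rlt_le_trans _ _ _ Hy (Rmin_l _ _)).
have A2 := H2 y (Rlt_le_trans _ _ _ Hy (Rmin_r _ _)).
have -> : a y + b y - (a x + b x) = (a y - a x) + (b y - b x) by ring.
apply: Rle_lt_trans (Rabs_triang _ _) _. lra.
Qed.

Lemma contat_const {n} (c : R) (x : vec n) : contat (fun _ => c) x.
Proof. apply: diff_cont. apply: diffat_const. Qed.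

Definition Fq (A r k q : R) := A * Rpower (r / (q - r ^ 2)) k.
Definition F1 (A r k q : R) := - k * Fq A r k q / (q - r ^ 2).
Definition F2 (A r k q : R) := k * (k + 1) * Fq A r k q / (q - r ^ 2) ^ 2.

Lemma Fq_der A r k q : 0 < r -> r ^ 2 < q -> derivable_pt_lim (Fq A r k) q (F1 A r k q).
Proof.
move=> Hr Hq. apply/is_derive_Reals. rewrite /F1 /Fq /Rpower.
have Hs : 0 < q - r ^ 2 by lra.
have Hp : 0 < r / (q - r ^ 2) by apply: Rdiv_lt_0_compat.
auto_derive.
- have E : q + - (r * (r * 1)) = q - r ^ 2 by simpl; ring.
  rewrite E. split; first lra. split => //.
- have E : q + - (r * (r * 1)) = q - r ^ 2 by simpl; ring.
  rewrite E -/(Rdiv r (q - r ^ 2)). field. split; lra.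
Qed.

Lemma F1_der A r k q : 0 < r -> r ^ 2 < q -> derivable_pt_lim (F1 A r k) q (F2 A r k q).
Proof.
move=> Hr Hq. apply/is_derive_Reals. rewrite /F2 /F1 /Fq /Rpower.
have Hs : 0 < q - r ^ 2 by lra.
have Hp : 0 < r / (q - r ^ 2) by apply: Rdiv_lt_0_compat.
auto_derive.
- have E : q + - (r * (r * 1)) = q - r ^ 2 by simpl; ring.
  rewrite E. split; first lra. split => //. split => //; lra.
- have E : q + - (r * (r * 1)) = q - r ^ 2 by simpl; ring.
  rewrite E -/(Rdiv r (q - r ^ 2)). field. split; lra.
Qed.

Lemma F2_cont A r k q : 0 < r -> r ^ 2 < q -> continuity_pt (F2 A r k) q.
Proof.
move=> Hr Hq. apply: derivable_continuous_pt.
have Hs : 0 < q - r ^ 2 by lra.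
have Hp : 0 < r / (q - r ^ 2) by apply: Rdiv_lt_0_compat.
have H : ex_derive (F2 A r k) q.
  rewrite /F2 /Fq /Rpower. auto_derive.
  have E : q + - (r * (r * 1)) = q - r ^ 2 by simpl; ring.
  rewrite E. split; first lra. split => //. split => //. nra.
exists (Derive (F2 A r k) q). apply/is_derive_Reals. by apply: Derive_correct.
Qed.

Lemma F1_cont A r k q : 0 < r -> r ^ 2 < q -> continuity_pt (F1 A r k) q.
Proof.
move=> Hr Hq. apply: derivable_continuous_pt. exists (F2 A r k q). by apply: F1_der.
Qed.

Definition gr {n} (A r k : R) (x0 : vec n) (y : vec n) : vec n :=
  fun j => F1 A r k (qf x0 y) * (2 * (y j - x0 j)).
Definition Hr {n} (A r k : R) (x0 : vec n) (y : vec n) : mat n :=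
  fun i j => F1 A r k (qf x0 y) * (2 * (if i == j then 1 else 0))
             + 2 * (y i - x0 i) * (F2 A r k (qf x0 y) * (2 * (y j - x0 j))).

Lemma qf_gt {n} {x0 x : vec n} {r} : 0 < r -> r < ndist x x0 -> r ^ 2 < qf x0 x.
Proof.
move=> Hr H. rewrite /qf -ndist_sq. simpl. nra.
Qed.

Lemma der_2z p : derivable_pt_lim (fun z => 2 * z) p 2.
Proof. apply/is_derive_Reals. auto_derive => //. ring. Qed.

Lemma diffat_lin {n} (x0 x : vec n) i :
  diffat (fun y => 2 * (y i - x0 i)) x (fun j => 2 * (if i == j then 1 else 0)).
Proof.
apply: (diffat_chain (fun z => 2 * z) (fun y => y i - x0 i)).
  apply: der_2z. apply: diffat_coord.
Qed.

Lemma IsC2_rad {n} (U : vec n -> Prop) A r k (x0 : vec n) : 0 < r ->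
  (forall x, U x -> r < ndist x x0) ->
  IsC2 U (fun y => Fq A r k (qf x0 y)) (gr A r k x0) (Hr A r k x0).
Proof.
move=> Hr0 HU. split; [|split].
- move=> x Ux. have Hq := qf_gt Hr0 (HU x Ux).
  apply: (diffat_chain (Fq A r k) (qf x0)).
    by apply: Fq_der. apply: diffat_q.
- move=> x Ux i. have Hq := qf_gt Hr0 (HU x Ux).
  have D1 := diffat_chain (F1 A r k) (qf x0) x (fun j => 2 * (x j - x0 j)) _ (F1_der A r k (qf x0 x) Hr0 Hq) (diffat_q x0 x).
  have D2 := diffat_lin x0 x i.
  exact: (diffat_mul _ _ _ _ _ D1 D2).
- move=> x Ux i j eps He. have Hq := qf_gt Hr0 (HU x Ux).
  have Cq := diff_cont (diffat_q x0 x).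
  have C1 := contat_comp (F1 A r k) (qf x0) x (F1_cont A r k (qf x0 x) Hr0 Hq) Cq.
  have C2 := contat_comp (F2 A r k) (qf x0) x (F2_cont A r k (qf x0 x) Hr0 Hq) Cq.
  have Ci := diff_cont (diffat_lin x0 x i).
  have Cj := diff_cont (diffat_lin x0 x j).
  have C := contat_add _ _ _ (contat_mul _ _ _ C1 (contat_const (2 * (if i == j then 1 else 0)) x))
              (contat_mul _ _ _ Ci (contat_mul _ _ _ C2 Cj)).
  have [d [Hd Hy]] := C eps He. exists d; split => // y _ Hyd.
  exact: (Hy y Hyd).
Qed.

Lemma Rpower_pos x y : 0 < Rpower x y.
Proof. rewrite /Rpower; apply: exp_pos. Qed.

Lemma Fq_pos A r k q : 0 < A -> 0 < Fq A r k q.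
Proof. move=> HA. rewrite /Fq. have := Rpower_pos (r / (q - r ^ 2)) k. nra. Qed.

Lemma conf_hess_rad n A r (x0 x : vec n) i j :
  (3 <= n)%nat -> 0 < A -> 0 < r -> r ^ 2 < qf x0 x ->
  let k := (INR n - 2) / 2 in
  let u := Fq A r k (qf x0 x) in
  conf_hess n u (gr A r k x0 x) (Hr A r k x0 x) i j =
  - (2 * r ^ 2 / (qf x0 x - r ^ 2) ^ 2 * Rpower u (- (2 / k))) * (if i == j then 1 else 0).
Proof.
move=> Hn HA Hr0 Hq k u.
have Hm : 3 <= INR n.
  have := le_INR 3 n (elimT leP Hn). simpl. lra.
have Hk : 0 < k by rewrite /k; lra.
have Hu : 0 < u by apply: Fq_pos.
set s := qf x0 x - r ^ 2. have Hs : 0 < s by rewrite /s; lra.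
set Z := Rpower u (- (2 / k)).
have E1 : Rpower u (- ((INR n + 2) / (INR n - 2))) = Z * / u.
  have -> : - ((INR n + 2) / (INR n - 2)) = - (2 / k) + - 1 by rewrite /k; field; lra.
  rewrite Rpower_plus (Rpower_Ropp u 1) Rpower_1 //.
have E2 : Rpower u (- (2 * INR n / (INR n - 2))) = Z * / u ^ 2.
  have -> : - (2 * INR n / (INR n - 2)) = - (2 / k) + - INR 2 by rewrite /k /=; field; lra.
  rewrite Rpower_plus (Rpower_Ropp u (INR 2)) Rpower_pow //.
have Eg : dot (gr A r k x0 x) (gr A r k x0 x) = F1 A r k (qf x0 x) ^ 2 * 4 * qf x0 x.
  rewrite /gr. set F := F1 A r k (qf x0 x). rewrite /dot /qf -rsum_scal. apply: rsum_ext => l. rewrite /vsub. ring.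
have EF1 : F1 A r k (qf x0 x) = - k * u / s by [].
have EF2 : F2 A r k (qf x0 x) = k * (k + 1) * u / s ^ 2 by [].
rewrite /conf_hess -/k E1 E2 Eg /Hr /gr EF1 EF2 -/s.
have Eq : qf x0 x = s + r ^ 2 by rewrite /s; ring.
rewrite Eq.
have Ek : INR n = 2 * k + 2 by rewrite /k; field.
rewrite Ek.
case: (i == j); field; lra.
Qed.

Lemma eig_scalar {n} (M : mat n) lam :
  (forall i j, M i j = lam * (if i == j then 1 else 0)) -> is_eigvals M (fun _ => lam).
Proof.
move=> HM. exists (fun i l => if i == l then 1 else 0). split.
- move=> i j. rewrite /dot.
  rewrite (rsum_ext _ (fun l => if i == l then (if j == l then 1 else 0) else 0)).
    rewrite rsum_delta. by rewrite eq_sym.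
  move=> l. case: (i == l); ring.
- move=> i. apply: functional_extensionality => l. rewrite /matvec /vscale.
  rewrite (rsum_ext _ (fun m => if i == m then lam * (if l == m then 1 else 0) else 0)).
    rewrite rsum_delta. by rewrite eq_sym.
  move=> m. rewrite HM. case: (i == m); ring.
Qed.

Lemma nnorm_scale {n} t (v : vec n) : nnorm (vscale t v) = Rabs t * nnorm v.
Proof.
rewrite /nnorm. rewrite -sqrt_Rsqr_abs -sqrt_mult; [|apply: Rle_0_sqr|apply: dot_ge0].
f_equal. rewrite /dot -rsum_scal. apply: rsum_ext => i. rewrite /vscale /Rsqr. ring.
Qed.

Lemma nclosure_scale {n} (Gam : vec n -> Prop) mu t :
  (forall l t, Gam l -> 0 < t -> Gam (vscale t l)) ->
  nclosure Gam mu -> 0 < t -> nclosure Gam (vscale t mu).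
Proof.
move=> Hc Hm Ht eps He. have [y [Gy Hy]] := Hm (eps / t) ltac:(apply: Rdiv_lt_0_compat; lra).
exists (vscale t y); split; first by apply: Hc.
have -> : ndist (vscale t mu) (vscale t y) = t * ndist mu y.
  rewrite /ndist. have -> : vsub (vscale t mu) (vscale t y) = vscale t (vsub mu y).
    apply: functional_extensionality => i. rewrite /vsub /vscale; ring.
  rewrite nnorm_scale Rabs_right //; lra.
have -> : eps = t * (eps / t) by field; lra.
apply: Rmult_lt_compat_l => //.
Qed.

Lemma Rpower_gt1 c p : 1 < c -> 0 < p -> 1 < Rpower c p.
Proof.
move=> Hc Hp. rewrite /Rpower. rewrite -exp_0. apply: exp_increasing.
have : 0 < ln c by rewrite -ln_1; apply: ln_increasing; lra. nra.
Qed.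

Lemma Rpower_gt1' t e : 0 < t -> t < 1 -> e < 0 -> 1 < Rpower t e.
Proof.
move=> H0 H1 He. rewrite /Rpower. rewrite -exp_0. apply: exp_increasing.
have : ln t < 0 by rewrite -ln_1; apply: ln_increasing; lra. nra.
Qed.

Lemma ndist_self {n} (x : vec n) : ndist x x = 0.
Proof.
rewrite /ndist /nnorm /dot (rsum_ext _ (fun _ => 0)).
  by rewrite rsum_const Rmult_0_r sqrt_0.
move=> i. rewrite /vsub; ring.
Qed.

Lemma IsC2_sub {n} (U V : vec n -> Prop) phi g H :
  (forall x, V x -> U x) -> IsC2 U phi g H -> IsC2 V phi g H.
Proof.
move=> S [H1 [H2 H3]]. split; [|split].
- move=> x Vx. by apply: H1; apply: S.
- move=> x Vx. by apply: H2; apply: S.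
- move=> x Vx i j eps He. have [d [Hd Hy]] := H3 x (S x Vx) i j eps He.
  exists d; split => // y Vy. by apply: Hy; apply: S.
Qed.

Lemma IsC2_ext {n} (U : vec n -> Prop) phi psi g H :
  (forall x, phi x = psi x) -> IsC2 U phi g H -> IsC2 U psi g H.
Proof.
move=> E [H1 [H2 H3]]. split; [|split] => //.
move=> x Ux eps He. have [d [Hd Hy]] := H1 x Ux eps He. exists d; split => // y Hyd.
rewrite -!E. by apply: Hy.
Qed.

Lemma u_out_Fq n alpha r (x0 x : vec n) :
  u_out n alpha r x0 x = Fq alpha r ((INR n - 2) / 2) (qf x0 x).
Proof. by rewrite /u_out /Fq ndist_sq. Qed.

Definition incr (phi : nat -> nat) := forall j, (phi j < phi j.+1)%nat.

Lemma incr_mono phi : incr phi -> forall a b, (a < b)%nat -> (phi a < phi b)%nat.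
Proof.
move=> H a b. elim: b => [|b IH] //. move=> Hab.
have := H b. case: (ltngtP a b) => [Hlt|Hgt|Heq].
- have := IH Hlt. lia.
- lia.
- by rewrite Heq.
Qed.

Lemma incr_ge phi : incr phi -> forall j, (j <= phi j)%nat.
Proof. move=> H; elim => [|j IH] //. have := H j. lia. Qed.

Lemma inv_small {e} : 0 < e -> exists N, forall j, (N <= j)%nat -> / (INR j + 1) < e.
Proof.
move=> He. have [N [HN HN0]] := archimed_cor1 e He. exists N => j Hj.
have HN' : 0 < INR N by apply: lt_0_INR.
have Hj' : INR N <= INR j by apply: le_INR; apply/leP.
apply: Rle_lt_trans HN. apply: Rinv_le_contravar => //. lra.
Qed.

Lemma BW1 (u : nat -> R) M : (forall k, Rabs (u k) <= M) ->
  exists phi, incr phi /\ exists l, forall e, 0 < e -> exists N, forall j, (N <= j)%nat ->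
    Rabs (u (phi j) - l) < e.
Proof.
move=> Hb.
have [l Hl] := Bolzano_Weierstrass u (fun c => -M <= c <= M) (compact_P3 (-M) M)
  ltac:(move=> k; have := Hb k; have := Rle_abs (u k); have := Rle_abs (- u k); rewrite Rabs_Ropp; lra).
have sel : forall N j, {p : nat | (N <= p)%nat /\ Rabs (u p - l) < / (INR j + 1)}.
  move=> N j. apply: constructive_indefinite_description.
  have Hpos : 0 < / (INR j + 1) by apply: Rinv_0_lt_compat; have := pos_INR j; lra.
  have [p [Hp Vp]] := Hl (fun y => Rabs (y - l) < / (INR j + 1)) N
    ltac:(exists (mkposreal _ Hpos) => y; rewrite /disc /=; done).
  exists p; split => //. by apply/leP.
pose phi := fix phi j := match j with 0 => proj1_sig (sel 0%nat 0%nat)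
   | S j' => proj1_sig (sel (phi j').+1 j) end.
exists phi; split.
  move=> j /=. by case: (proj2_sig (sel (phi j).+1 j.+1)).
exists l => e He. have [N HN] := inv_small He. exists N => j Hj.
apply: Rlt_trans (HN j Hj).
case: j {Hj} => [|j] /=. by case: (proj2_sig (sel 0%nat 0%nat)).
by case: (proj2_sig (sel (phi j).+1 j.+1)).
Qed.

Lemma BWn {n} (X : nat -> vec n) M : (forall k i, Rabs (X k i) <= M) ->
  exists phi, incr phi /\ exists xb : vec n, forall e, 0 < e -> exists N, forall j, (N <= j)%nat ->
    forall i, Rabs (X (phi j) i - xb i) < e.
Proof.
move=> Hb.
suff H : forall m, (m <= n)%nat -> exists phi, incr phi /\ exists xb : vec n, forall e, 0 < e ->
    exists N, forall j, (N <= j)%nat -> forall i : 'I_n, (i < m)%nat -> Rabs (X (phi j) i - xb i) < e.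
  have [phi [Hphi [xb Hx]]] := H n (leqnn n). exists phi; split => //. exists xb => e He.
  have [N HN] := Hx e He. exists N => j Hj i. by apply: HN.
elim => [|m IH] Hm.
  exists (fun j : nat => j); split; first by move=> j /=. exists (X 0%nat) => e He. exists 0%nat => j _ i. by [].
have Hm' : (m < n)%nat by [].
have [phi [Hphi [xb Hx]]] := IH (ltnW Hm').
set i0 := Ordinal Hm'.
have [psi [Hpsi [l Hl]]] := BW1 (fun j => X (phi j) i0) M (fun k => Hb _ _).
exists (fun j => phi (psi j)); split.
  move=> j. apply: (incr_mono _ Hphi). apply: Hpsi.
exists (fun i => if nat_of_ord i == m then l else xb i) => e He.
have [N1 HN1] := Hx e He. have [N2 HN2] := Hl e He.
exists (maxn N1 N2) => j Hj i Hi.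
case: eqP => [Eim|Nim].
- have -> : i = i0 by apply: val_inj.
  apply: HN2. lia.
- apply: HN1; last by lia.
  have := incr_ge _ Hpsi j. lia.
Qed.

Lemma conf_hess_rad' n A r (x0 x : vec n) i j k :
  (3 <= n)%nat -> 0 < A -> 0 < r -> r ^ 2 < qf x0 x -> k = (INR n - 2) / 2 ->
  conf_hess n (Fq A r k (qf x0 x)) (gr A r k x0 x) (Hr A r k x0 x) i j =
  - (2 * r ^ 2 / (qf x0 x - r ^ 2) ^ 2 * Rpower (Fq A r k (qf x0 x)) (- (2 / k)))
    * (if i == j then 1 else 0).
Proof. move=> H1 H2 H3 H4 ->. exact: conf_hess_rad. Qed.

Theorem lemma3p2 (n : nat) (f : vec n -> R) (Gam : vec n -> Prop) (alpha : R)
  (Om : vec n -> Prop) (w : vec n -> ER) (Rr : R) (x0 : vec n) :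
  (3 <= n)%nat ->
  structural n f Gam ->
  canonical_const n f Gam alpha ->
  ndomain Om -> nbounded Om ->
  (forall x, Om x -> ER_lt 0 (w x)) ->
  visc_supersol f Gam Om w ->
  (forall M, exists d, 0 < d /\ forall x, Om x ->
     (exists y, nboundary Om y /\ ndist x y < d) -> ER_lt M (w x)) ->
  0 < Rr ->
  (forall y, ndist y x0 < Rr -> ~ nclosure Om y) ->
  forall x, Om x -> 0 < u_out n alpha Rr x0 x /\ ER_le (u_out n alpha Rr x0 x) (w x).
Proof.
move=> Hn Hst Hcan Hdom Hbd Hpos Hvisc Hblow HR Hball x Ox.
case: Hcan => [Hal [Hout _]].
case: Hst => [_ [_ [_ [Hcone [_ [_ [_ [_ [_ [_ [_ Hhom]]]]]]]]]]].
case: Hvisc => [Hlsc [_ Hvs]].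
case: Hdom => [Hopen _].
case: Hbd => [B0 HB0].
have [k Ek] : exists k, k = (INR n - 2) / 2 by eexists.
have Hm : 3 <= INR n.
  have := le_INR 3 n (elimT leP Hn). simpl. lra.
have Hk : 0 < k by rewrite Ek; lra.
split.
  rewrite u_out_Fq. by apply: Fq_pos.
have Hob : forall y, Om y -> Rr < ndist y x0.
  move=> y Oy. case: (Rlt_le_dec Rr (ndist y x0)) => // Hle. exfalso.
  have Hge : Rr <= ndist y x0.
    case: (Rlt_le_dec (ndist y x0) Rr) => // Hlt. exfalso. apply: (Hball y Hlt).
    move=> eps He. exists y; split => //. by rewrite ndist_self.
  have Heq : ndist y x0 = Rr by lra.
  have [d [Hd Hyd]] := Hopen y Oy.
  pose t := Rmin (1/2) (d / (2 * Rr)).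
  have Ht0 : 0 < t by apply: Rmin_pos; [lra|apply: Rdiv_lt_0_compat; lra].
  have Ht1 : t <= 1/2 by apply: Rmin_l.
  have Ht2 : t <= d / (2 * Rr) by apply: Rmin_r.
  pose z := fun i => y i + t * (x0 i - y i).
  have Ez1 : ndist z x0 = (1 - t) * Rr.
    rewrite /ndist. have -> : vsub z x0 = vscale (1 - t) (vsub y x0).
      apply: functional_extensionality => i. rewrite /vsub /vscale /z; ring.
    rewrite nnorm_scale Rabs_right; [|lra]. rewrite -/(ndist y x0) Heq; ring.
  have Ez2 : ndist z y = t * Rr.
    rewrite /ndist. have -> : vsub z y = vscale t (vsub x0 y).
      apply: functional_extensionality => i. rewrite /vsub /vscale /z; ring.
    rewrite nnorm_scale Rabs_right; [|lra]. rewrite -/(ndist x0 y) ndist_sym Heq; ring.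
  have Oz : Om z.
    apply: Hyd. rewrite Ez2.
    have : t * Rr <= d / (2 * Rr) * Rr by apply: Rmult_le_compat_r; lra.
    have -> : d / (2 * Rr) * Rr = d / 2 by field; lra. lra.
  apply: (Hball z). rewrite Ez1; nra.
  move=> eps He. exists z; split => //. by rewrite ndist_self.
rewrite u_out_Fq -Ek.
case Ew : (w x) => [W|] //=.
apply: Rnot_lt_le => HW.
set Q := qf x0 x.
have HQ : Rr ^ 2 < Q := qf_gt HR (Hob x Ox).
have Gc : continuity_pt (fun rho => Fq alpha rho k Q) Rr.
  apply: derivable_continuous_pt.
  have Hs : 0 < Q - Rr ^ 2 by lra.
  have Hp : 0 < Rr / (Q - Rr ^ 2) by apply: Rdiv_lt_0_compat.
  have H : ex_derive (fun rho => Fq alpha rho k Q) Rr.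
    rewrite /Fq /Rpower. auto_derive.
    have E : Q + - (Rr * (Rr * 1)) = Q - Rr ^ 2 by simpl; ring.
    rewrite E. split; first lra. split => //.
  exists (Derive (fun rho => Fq alpha rho k Q) Rr). apply/is_derive_Reals. by apply: Derive_correct.
have HWp : 0 < Fq alpha Rr k Q - W by rewrite /Q; lra.
have [del [Hdel Hc]] := cont_pt_eps Gc (Fq alpha Rr k Q - W) HWp.
pose rho := Rmax (Rr / 2) (Rr - del / 2).
have Hr1 : 0 < rho by apply: Rlt_le_trans (Rmax_l _ _); lra.
have Hr2 : rho < Rr by apply: Rmax_lub_lt; lra.
have Hr3 : Rabs (rho - Rr) < del.
  rewrite Rabs_left; [|lra]. have := Rmax_r (Rr / 2) (Rr - del / 2). rewrite -/rho. lra.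
have HWr : W < Fq alpha rho k Q.
  have := Hc rho Hr3. move/Rabs_def2 => [A1 A2]. lra.
pose u := fun y => Fq alpha rho k (qf x0 y).
have upos : forall y, 0 < u y by move=> y; apply: Fq_pos.
pose Ub := alpha * Rpower (rho / (Rr ^ 2 - rho ^ 2)) k.
have Hub : forall y, Om y -> u y <= Ub.
  move=> y Oy. have Hq := qf_gt HR (Hob y Oy). rewrite /u /Fq /Ub.
  apply: Rmult_le_compat_l; first lra. apply: Rle_Rpower_l; first lra.
  have H1 : 0 < Rr ^ 2 - rho ^ 2 by nra.
  split. apply: Rdiv_lt_0_compat; lra.
  apply: Rmult_le_compat_l; first lra. apply: Rinv_le_contravar => //; lra.
pose T := fun t => 0 <= t /\ forall y, Om y -> ER_le (t * u y) (w y).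
have T0 : T 0.
  split; first lra. move=> y Oy. have := Hpos y Oy. case: (w y) => //= v. lra.
have Tb : forall t, T t -> t <= W / u x.
  move=> t [_ Ht]. have := Ht x Ox. rewrite Ew /= => H.
  apply: (Rmult_le_reg_r (u x)); first by apply: upos.
  rewrite /Rdiv Rmult_assoc Rinv_l; [|have := upos x; lra]. lra.
have [ts Hts] := completeness T (ex_intro _ (W / u x) Tb) (ex_intro _ 0 T0).
have Hts0 : 0 <= ts by apply: (proj1 Hts).
have Hts1 : ts < 1.
  apply: Rle_lt_trans (_ : ts <= W / u x) _. apply: (proj2 Hts) => t Ht. by apply: Tb.
  apply: (Rmult_lt_reg_r (u x)); first by apply: upos.
  rewrite /Rdiv Rmult_assoc Rinv_l; [|have := upos x; lra]. rewrite Rmult_1_l Rmult_1_r.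
  done.
have Tts : T ts.
  split => // y Oy. case Ewy : (w y) => [v|] //=. apply: Rnot_lt_le => Hvy.
  have : ts <= v / u y.
    apply: (proj2 Hts) => t [Ht0 Ht]. have := Ht y Oy. rewrite Ewy /= => H.
    apply: (Rmult_le_reg_r (u y)); first by apply: upos.
    rewrite /Rdiv Rmult_assoc Rinv_l; [|have := upos y; lra]. lra.
  move=> H. have : ts * u y <= v.
    have -> : v = v / u y * u y by field; have := upos y; lra.
    apply: Rmult_le_compat_r => //. have := upos y; lra.
  lra.
pose tj := fun j : nat => ts + / (INR j + 1).
have tj_pos : forall j, 0 < / (INR j + 1).
  move=> j; apply: Rinv_0_lt_compat; have := pos_INR j; lra.
have tj_le1 : forall j, / (INR j + 1) <= 1.
  move=> j. rewrite -Rinv_1. apply: Rinv_le_contravar; first lra. have := pos_INR j; lra.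
have notT : forall j, exists y, Om y /\ exists v, w y = ERfin v /\ v < tj j * u y.
  move=> j. apply: NNPP => Hne.
  have HT : T (tj j).
    split. have := tj_pos j; rewrite /tj; lra.
    move=> y Oy. case Ewy : (w y) => [v|] //=. apply: Rnot_lt_le => Hvy.
    apply: Hne. exists y; split => //. exists v; split => //.
  have := (proj1 Hts) _ HT. have := tj_pos j. rewrite /tj. lra.
have [X HX] : exists X : nat -> vec n, forall j, Om (X j) /\
    exists v, w (X j) = ERfin v /\ v < tj j * u (X j).
  exists (fun j => proj1_sig (constructive_indefinite_description _ (notT j))).
  move=> j. exact: (proj2_sig (constructive_indefinite_description _ (notT j))).
have [d [Hd Hbl]] := Hblow (2 * Ub).
have Xfar : forall j, ~ exists z, nboundary Om z /\ ndist (X j) z < d.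
  move=> j Hex. have [OX [v [Ev Hv]]] := HX j. have := Hbl (X j) OX Hex. rewrite Ev /= => H2.
  have := Hub (X j) OX. have := upos (X j). have := tj_le1 j. have := tj_pos j.
  rewrite /tj in Hv. nra.
have [phi [Hphi [xb Hxb]]] := BWn X B0 (fun k i => Rle_trans _ _ _ (coord_le (X k) i) (HB0 _ (proj1 (HX k)))).
have Hconv : forall e, 0 < e -> exists N, forall j, (N <= j)%nat -> ndist (X (phi j)) xb < e.
  move=> e He. have Hsq := sqrt_pos (INR n).
  have He' : 0 < e / (sqrt (INR n) + 1) by apply: Rdiv_lt_0_compat; lra.
  have [N HN] := Hxb _ He'. exists N => j Hj.
  apply: Rle_lt_trans (ndist_coord_small _ _ _ He' (HN j Hj)) _.
  apply: (Rmult_lt_reg_r (sqrt (INR n) + 1)); first lra.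
  have -> : sqrt (INR n) * (e / (sqrt (INR n) + 1)) * (sqrt (INR n) + 1) = sqrt (INR n) * e by field; lra.
  nra.
have Hcl : nclosure Om xb.
  move=> eps He. have [N HN] := Hconv eps He. exists (X (phi N)); split; first exact: (proj1 (HX _)).
  rewrite ndist_sym. apply: HN. by [].
have Oxb : Om xb.
  apply: NNPP => Hno. have [N HN] := Hconv d Hd. apply: (Xfar (phi N)).
  exists xb; split; [split|] => //. by apply: HN.
have HC2u : IsC2 Om u (gr alpha rho k x0) (Hr alpha rho k x0).
  apply: IsC2_rad => // y Oy. have := Hob y Oy. lra.
have Cu : contat u xb := diff_cont ((proj1 HC2u) xb Oxb).
have Claim : forall b dl, ts * u xb < b -> 0 < dl -> exists y, Om y /\ ndist y xb < dl /\
    exists v, w y = ERfin v /\ v < b.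
  move=> b dl Hb Hdl. set gap := b - ts * u xb. have Hgap : 0 < gap by rewrite /gap; lra.
  have [du [Hdu Cuy]] := Cu (gap / 4) ltac:(lra).
  have [N0 HN0] := Hconv (Rmin dl du) ltac:(apply: Rmin_pos; lra).
  have Hux := upos xb.
  have He1 : 0 < gap / (4 * (u xb + gap + 1)) by apply: Rdiv_lt_0_compat; lra.
  have [N1 HN1] := inv_small He1.
  pose j := maxn N0 N1.
  have Hj0 : (N0 <= j)%nat by rewrite /j; lia.
  have Hj1 : (N1 <= phi j)%nat by have := incr_ge _ Hphi j; rewrite /j; lia.
  have [OX [v [Ev Hv]]] := HX (phi j).
  have Hnd := HN0 j Hj0.
  exists (X (phi j)); split => //; split.
    apply: Rlt_le_trans Hnd (Rmin_l _ _).
  exists v; split => //.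
  have Hu1 := Cuy (X (phi j)) (Rlt_le_trans _ _ _ Hnd (Rmin_r _ _)).
  move/Rabs_def2: Hu1 => [Hu1 _].
  have He2 := HN1 _ Hj1.
  have Hupos := upos (X (phi j)).
  have A1 : ts * u (X (phi j)) <= ts * u xb + gap / 4.
    have : ts * u (X (phi j)) <= ts * (u xb + gap / 4) by apply: Rmult_le_compat_l; lra.
    nra.
  have A2 : / (INR (phi j) + 1) * u (X (phi j)) <= gap / 4.
    apply: Rle_trans (_ : gap / (4 * (u xb + gap + 1)) * (u xb + gap + 1) <= _).
    apply: Rmult_le_compat; try lra. have := tj_pos (phi j); lra.
    right; field; lra.
  rewrite /tj in Hv. rewrite /gap in A1 A2. lra.
have Tx := (proj2 Tts) xb Oxb.
have Ewx : w xb = ERfin (ts * u xb).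
  case Ewb : (w xb) => [v0|].
  - rewrite Ewb /= in Tx. case: (Rle_lt_or_eq_dec _ _ Tx) => [Hlt|->] //. exfalso.
    have [dl [Hdl Hdly]] := Hlsc xb Oxb ((ts * u xb + v0) / 2) ltac:(rewrite Ewb /=; lra).
    have [y [Oy [Hy [v [Ev Hv]]]]] := Claim ((ts * u xb + v0) / 2) dl ltac:(lra) Hdl.
    have := Hdly y Oy Hy. rewrite Ev /=. lra.
  - exfalso.
    have [dl [Hdl Hdly]] := Hlsc xb Oxb (ts * u xb + 1) ltac:(rewrite Ewb /=; done).
    have [y [Oy [Hy [v [Ev Hv]]]]] := Claim (ts * u xb + 1) dl ltac:(lra) Hdl.
    have := Hdly y Oy Hy. rewrite Ev /=. lra.
have Hts' : 0 < ts.
  have := Hpos xb Oxb. rewrite Ewx /=. have := upos xb. nra.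
pose A := ts * alpha.
have HA : 0 < A by rewrite /A; nra.
pose ph := fun y => Fq A rho k (qf x0 y).
have Eph : forall y, ph y = ts * u y by move=> y; rewrite /ph /u /Fq /A; ring.
have HC2 : IsC2 Om ph (gr A rho k x0) (Hr A rho k x0).
  apply: IsC2_rad => // y Oy. have := Hob y Oy. lra.
have HC2' : IsC2 (fun y => rho < ndist y x0) (u_out n alpha rho x0) (gr alpha rho k x0) (Hr alpha rho k x0).
  apply: (IsC2_ext _ (fun y => Fq alpha rho k (qf x0 y))).
    move=> y. by rewrite u_out_Fq -Ek.
  by apply: IsC2_rad.
have Hxb_r : rho < ndist xb x0 by have := Hob xb Oxb; lra.
have Hqb : rho ^ 2 < qf x0 xb := qf_gt Hr1 Hxb_r.
have Hsol := Hout rho x0 Hr1 _ _ HC2' xb Hxb_r.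
pose lam1 := 2 * rho ^ 2 / (qf x0 xb - rho ^ 2) ^ 2 * Rpower (u xb) (- (2 / k)).
have Eig1 : is_eigvals (mopp (conf_hess n (u_out n alpha rho x0 xb) (gr alpha rho k x0 xb)
               (Hr alpha rho k x0 xb))) (fun _ => lam1).
  apply: eig_scalar => i j. rewrite /mopp u_out_Fq -Ek.
  rewrite (conf_hess_rad' _ _ _ _ _ i j _ Hn Hal Hr1 Hqb Ek). rewrite /lam1 /u. ring.
have [Hcl1 Hf1] := Hsol _ Eig1.
pose c := Rpower ts (- (2 / k)).
have Hc1 : 1 < c.
  apply: Rpower_gt1' => //. have : 0 < 2 / k by apply: Rdiv_lt_0_compat; lra. lra.
have Eig2 : is_eigvals (mopp (conf_hess n (ph xb) (gr A rho k x0 xb) (Hr A rho k x0 xb)))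
              (vscale c (fun _ => lam1)).
  apply: eig_scalar => i j. rewrite /mopp /ph.
  rewrite (conf_hess_rad' _ _ _ _ _ i j _ Hn HA Hr1 Hqb Ek).
  rewrite -/(ph xb) Eph. rewrite -Rpower_mult_distr; [|done|exact: upos].
  rewrite /lam1 /c. ring.
have Hwph : w xb = ERfin (ph xb) by rewrite Eph.
have Hloc : exists d, 0 < d /\ forall y, Om y -> ndist y xb < d -> ER_le (ph y) (w y).
  exists 1; split; first lra. move=> y Oy _. rewrite Eph. exact: (proj2 Tts) y Oy.
case: (Hvs xb Oxb ph _ _ HC2 Hwph Hloc _ Eig2) => [Hncl|Hfle].
  apply: Hncl. apply: nclosure_scale => //. lra.
have [p [Hp Hh]] := Hhom.
rewrite Hh // in Hfle; last lra.
rewrite Hf1 Rmult_1_r in Hfle.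
have := Rpower_gt1 _ _ Hc1 Hp. lra.
Qed.
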